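(* Let $n \ge 2$, $k \ge 1$ and $n_i, m_i \in \mathbb{Z}\setminus\{0\}$ for $1 \le i \le k$. If the group presented by $\mathcal{P}_n(n_1,\dots,n_k;m_1,\dots,m_k)$ is isomorphic to $Q_{4n}$, then the map $x \mapsto x$, $y \mapsto y$ induces a group isomorphism from the group presented by $\mathcal{P}_n(n_1,\dots,n_k;m_1,\dots,m_k)$ to $Q_{4n}$.
   Context: $Q_{4n} = \langle x, y \mid x^n y^{-2}, xyxy^{-1} \rangle$. With $n_{k+1} = 1 - \sum_{i=1}^k n_i$, $m_{k+1} = 1 - \sum_{i=1}^k m_i$, $\mathcal{P}_n(n_1,\dots,n_k;m_1,\dots,m_k) = \langle x, y \mid x^n y^{-2},\ x^{n_1} y x^{m_1} y^{-1} \cdots x^{n_{k+1}} y x^{m_{k+1}} y^{-1} \rangle$. *)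

(* Defs.v *)
From Stdlib Require Import ZArith List.
Import ListNotations.
Open Scope Z_scope.

Record Grp := MkGrp {
  gcar :> Type;
  gmul : gcar -> gcar -> gcar;
  ginv : gcar -> gcar;
  gone : gcar;
  gmulA : forall a b c, gmul a (gmul b c) = gmul (gmul a b) c;
  gmul1 : forall a, gmul gone a = a;
  gmulV : forall a, gmul (ginv a) a = gone
}.
Arguments gmul {g}.
Arguments ginv {g}.
Arguments gone {g}.

Definition is_hom {G H : Grp} (f : G -> H) : Prop :=
  forall a b : G, f (gmul a b) = gmul (f a) (f b).

Definition is_iso {G H : Grp} (f : G -> H) : Prop :=
  is_hom f /\ exists g : H -> G, (forall a, g (f a) = a) /\ (forall b, f (g b) = b).

Definition zpow {G : Grp} (g : G) (z : Z) : G :=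
  match z with
  | Z0 => gone
  | Zpos p => Nat.iter (Pos.to_nat p) (gmul g) gone
  | Zneg p => Nat.iter (Pos.to_nat p) (gmul (ginv g)) gone
  end.

(** A word in the generators x (false) and y (true): the list
    [(s1,e1); ...; (sr,er)] stands for s1^e1 * ... * sr^er. *)
Definition word := list (bool * Z).

Definition eval_word {G : Grp} (a b : G) (w : word) : G :=
  fold_right (fun (p : bool * Z) (acc : gcar G) => gmul (zpow (if fst p then b else a) (snd p)) acc) gone w.

Definition satisfies {G : Grp} (a b : G) (R : list word) : Prop :=
  Forall (fun w => eval_word a b w = gone) R.

Definition presents (G : Grp) (a b : G) (R : list word) : Prop :=
  satisfies a b R /\
  forall (H : Grp) (c d : H), satisfies c d R ->
    exists f : G -> H, is_hom f /\ f a = c /\ f b = d /\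
      (forall g : G -> H, is_hom g -> g a = c -> g b = d -> forall z, g z = f z).

Definition relQ (n : nat) : list word :=
  [ [(false, Z.of_nat n); (true, -2)] ;
    [(false, 1); (true, 1); (false, 1); (true, -1)] ].

Definition sumZ (l : list Z) : Z := fold_right Z.add 0 l.

(** Relators of P_n(n_1..n_k; m_1..m_k), with n_{k+1} = 1 - sum n_i,
    m_{k+1} = 1 - sum m_i:
    x^n y^{-2},  x^{n_1} y x^{m_1} y^{-1} ... x^{n_{k+1}} y x^{m_{k+1}} y^{-1}. *)
Definition relP (n : nat) (ns ms : list Z) : list word :=
  let ns' := ns ++ [1 - sumZ ns] in
  let ms' := ms ++ [1 - sumZ ms] in
  [ [(false, Z.of_nat n); (true, -2)] ;
    flat_map (fun p => [(false, fst p); (true, 1); (false, snd p); (true, -1)])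
             (combine ns' ms') ].

(* Main.v *)
Require Import Defs.
From Stdlib Require Import ZArith List.
From Stdlib Require Import Lia FinFun Classical ProofIrrelevance.
Import ListNotations.
Open Scope Z_scope.


Section GroupLemmas.
Variable G : Grp.
Implicit Types a b x y z g : G.

Lemma mulrV a : gmul a (ginv a) = gone.
Proof.
  rewrite <- (gmul1 _ (gmul a (ginv a))).
  rewrite <- (gmulV _ (ginv a)) at 1.
  rewrite <- gmulA, (gmulA _ (ginv a) a (ginv a)), gmulV, gmul1. apply gmulV.
Qed.

Lemma mulr1 a : gmul a gone = a.
Proof. rewrite <- (gmulV _ a), gmulA, mulrV, gmul1. reflexivity. Qed.

Lemma mulKl x a b : gmul x a = gmul x b -> a = b.
Proof.
  intro H. rewrite <- (gmul1 _ a), <- (gmul1 _ b), <- (gmulV _ x), <- !gmulA, H. reflexivity.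
Qed.

Lemma mulKr x a b : gmul a x = gmul b x -> a = b.
Proof.
  intro H. rewrite <- (mulr1 a), <- (mulr1 b), <- (mulrV x), !gmulA, H. reflexivity.
Qed.

Lemma inv_uniq_l x y : gmul x y = gone -> x = ginv y.
Proof. intro H. apply (mulKr y). rewrite H, gmulV. reflexivity. Qed.

Lemma invK x : ginv (ginv x) = x.
Proof. symmetry. apply inv_uniq_l. apply mulrV. Qed.

Lemma zpow0 g : zpow g 0 = gone.
Proof. reflexivity. Qed.

Lemma zpow_succ g i : zpow g (Z.succ i) = gmul g (zpow g i).
Proof.
  destruct i as [|p|p].
  - reflexivity.
  - replace (Z.succ (Zpos p)) with (Zpos (Pos.succ p)) by lia.
    unfold zpow. rewrite Pos2Nat.inj_succ. reflexivity.
  - destruct (Pos.eq_dec p 1) as [->|Hp].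
    + simpl. rewrite gmulA, mulrV, gmul1. reflexivity.
    + assert (E : p = Pos.succ (Pos.pred p)) by (symmetry; apply Pos.succ_pred; exact Hp).
      replace (Z.succ (Zneg p)) with (Zneg (Pos.pred p)) by lia.
      rewrite E at 2. unfold zpow. rewrite Pos2Nat.inj_succ. simpl.
      rewrite gmulA, mulrV, gmul1. reflexivity.
Qed.

Lemma zpow_pred g i : zpow g (Z.pred i) = gmul (ginv g) (zpow g i).
Proof.
  rewrite <- (Z.succ_pred i) at 2. rewrite zpow_succ, gmulA, gmulV, gmul1. reflexivity.
Qed.

Lemma zpow_add g i j : zpow g (i + j) = gmul (zpow g i) (zpow g j).
Proof.
  revert i. apply Z.peano_ind.
  - simpl. rewrite gmul1. reflexivity.
  - intros i IH. rewrite Z.add_succ_l, !zpow_succ, IH, gmulA. reflexivity.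
  - intros i IH. rewrite Z.add_pred_l, !zpow_pred, IH, gmulA. reflexivity.
Qed.

Lemma zpow_opp g i : zpow g (- i) = ginv (zpow g i).
Proof. apply inv_uniq_l. rewrite <- zpow_add, Z.add_opp_diag_l. reflexivity. Qed.

Lemma zpow1 g : zpow g 1 = g.
Proof. simpl. apply mulr1. Qed.

Lemma zpowm1 g : zpow g (-1) = ginv g.
Proof. simpl. apply mulr1. Qed.

Lemma zpow_inv g i : zpow (ginv g) i = zpow g (- i).
Proof.
  revert i. apply Z.peano_ind.
  - reflexivity.
  - intros i IH. rewrite zpow_succ, IH, <- zpow_pred. f_equal. lia.
  - intros i IH. rewrite zpow_pred, IH, invK, <- zpow_succ. f_equal. lia.
Qed.

Lemma zpow_mul_one g m q : zpow g m = gone -> zpow g (m * q) = gone.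
Proof.
  intro H. revert q. apply Z.peano_ind.
  - rewrite Z.mul_0_r. reflexivity.
  - intros q IH. replace (m * Z.succ q) with (m * q + m) by lia.
    rewrite zpow_add, IH, H, gmul1. reflexivity.
  - intros q IH. replace (m * Z.pred q) with (m * q + - m) by lia.
    rewrite zpow_add, IH, zpow_opp, H, gmul1.
    symmetry. apply inv_uniq_l. apply gmul1.
Qed.

Lemma eval_app a b w1 w2 :
  eval_word a b (w1 ++ w2) = gmul (eval_word a b w1) (eval_word a b w2).
Proof.
  induction w1 as [|p w1 IH]; simpl.
  - rewrite gmul1. reflexivity.
  - rewrite IH, gmulA. reflexivity.
Qed.

End GroupLemmas.
Arguments mulKl {G} x a b.
Arguments mulKr {G} x a b.

Section HomLemmas.
Variables G H : Grp.
Variable f : G -> H.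
Hypothesis hf : is_hom f.

Lemma hom1 : f gone = gone.
Proof.
  apply (mulKr (f gone)). rewrite <- hf, !gmul1. reflexivity.
Qed.

Lemma homV x : f (ginv x) = ginv (f x).
Proof. apply inv_uniq_l. rewrite <- hf, gmulV. apply hom1. Qed.

Lemma hom_zpow g i : f (zpow g i) = zpow (f g) i.
Proof.
  revert i. apply Z.peano_ind.
  - apply hom1.
  - intros i IH. rewrite !zpow_succ, hf, IH. reflexivity.
  - intros i IH. rewrite !zpow_pred, hf, IH, homV. reflexivity.
Qed.

Lemma hom_eval a b w : f (eval_word a b w) = eval_word (f a) (f b) w.
Proof.
  induction w as [|[s e] w IH]; simpl.
  - apply hom1.
  - rewrite hf, IH, hom_zpow. destruct s; reflexivity.
Qed.

Lemma sat_inj a b R :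
  (forall x y, f x = f y -> x = y) -> satisfies (f a) (f b) R -> satisfies a b R.
Proof.
  intros Hi HS. unfold satisfies in *. eapply Forall_impl; [|exact HS].
  intros w Hw. apply Hi. rewrite hom_eval, hom1. exact Hw.
Qed.

End HomLemmas.


Lemma inv_uniq_r (G : Grp) (x y : G) : gmul x y = gone -> y = ginv x.
Proof. intro H. apply (mulKl x). rewrite H, mulrV. reflexivity. Qed.

Section RelQ.
Variable G : Grp.
Variables c d : G.
Variable N : Z.
Hypothesis H1 : gmul (zpow c N) (gmul (zpow d (-2)) gone) = gone.
Hypothesis H2 : gmul (zpow c 1) (gmul (zpow d 1) (gmul (zpow c 1) (gmul (zpow d (-1)) gone))) = gone.

Lemma dd : gmul d d = zpow c N.
Proof.
  rewrite mulr1 in H1. apply inv_uniq_l in H1. rewrite H1, <- zpow_opp. simpl.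
  rewrite mulr1. reflexivity.
Qed.

Lemma conj1 : gmul d (gmul c (ginv d)) = ginv c.
Proof.
  rewrite !zpow1, zpowm1, mulr1 in H2. apply inv_uniq_r. rewrite <- H2.
  rewrite !gmulA. reflexivity.
Qed.

Lemma conj_hom : is_hom (fun x : G => gmul d (gmul x (ginv d))).
Proof.
  intros x y. cbv beta. rewrite !gmulA, <- (gmulA _ _ (ginv d) d), gmulV, mulr1, ?gmulA. reflexivity.
Qed.

Lemma conjk k : gmul d (gmul (zpow c k) (ginv d)) = zpow c (- k).
Proof.
  pose proof (hom_zpow _ _ _ conj_hom c k) as E. simpl in E. rewrite E, conj1, zpow_inv.
  reflexivity.
Qed.

Lemma dc k : gmul d (zpow c k) = gmul (zpow c (- k)) d.
Proof.
  rewrite <- conjk, <- !gmulA, gmulV, mulr1. reflexivity.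
Qed.

Lemma c2N : zpow c (2 * N) = gone.
Proof.
  assert (E : zpow c N = zpow c (- N)).
  { rewrite <- conjk, <- dd, !gmulA, <- (gmulA _ _ d (ginv d)), mulrV, mulr1. reflexivity. }
  replace (2 * N) with (N + N) by lia. rewrite zpow_add. rewrite E at 1.
  rewrite <- zpow_add, Z.add_opp_diag_l. reflexivity.
Qed.

End RelQ.


Lemma sat_relQ_eqs (G : Grp) (c d : G) n : satisfies c d (relQ n) ->
  gmul (zpow c (Z.of_nat n)) (gmul (zpow d (-2)) gone) = gone /\
  gmul (zpow c 1) (gmul (zpow d 1) (gmul (zpow c 1) (gmul (zpow d (-1)) gone))) = gone.
Proof.
  intro H. inversion H as [|w l Hw Hl]; subst. inversion Hl; subst. simpl in *. split; assumption.
Qed.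

Section Gen.
Variable Q : Grp.
Variables c d : Q.
Variable n : nat.
Hypothesis Hn : (2 <= n)%nat.
Hypothesis HQ : presents Q c d (relQ n).

Let N := Z.of_nat n.
Let H1 : gmul (zpow c N) (gmul (zpow d (-2)) gone) = gone := proj1 (sat_relQ_eqs _ _ _ _ (proj1 HQ)).
Let H2 := proj2 (sat_relQ_eqs _ _ _ _ (proj1 HQ)).

Definition elt i (j : bool) := gmul (zpow c i) (if j then d else gone).
Definition inS (x : Q) := exists i j, x = elt i j.

Lemma dcL x k : gmul (gmul x d) (zpow c k) = gmul (gmul x (zpow c (- k))) d.
Proof. rewrite <- !gmulA, (dc _ _ _ H2). reflexivity. Qed.

Lemma zaddL x i j : gmul (gmul x (zpow c i)) (zpow c j) = gmul x (zpow c (i + j)).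
Proof. rewrite zpow_add, gmulA. reflexivity. Qed.

Lemma S_mul x y : inS x -> inS y -> inS (gmul x y).
Proof.
  intros [i [j ->]] [i' [j' ->]]. unfold elt.
  destruct j, j'.
  - exists (i + - i' + N), false. unfold elt. rewrite mulr1, !zpow_add, <- (dd _ _ _ _ H1).
    rewrite !gmulA, dcL. reflexivity.
  - exists (i + - i'), true. unfold elt. rewrite mulr1, zpow_add. apply dcL.
  - exists (i + i'), true. unfold elt. rewrite mulr1, gmulA, <- zpow_add. reflexivity.
  - exists (i + i'), false. unfold elt. rewrite !mulr1, zpow_add. reflexivity.
Qed.

Lemma S_inv x : inS x -> inS (ginv x).
Proof.
  intros [i [j ->]]. unfold elt. destruct j.
  - exists (- N + i), true. unfold elt. symmetry. apply inv_uniq_l.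
    rewrite gmulA, dcL, <- gmulA, (dd _ _ _ _ H1), zaddL, <- zpow_add.
    replace (- N + i + (- i + N)) with 0 by lia. reflexivity.
  - exists (- i), false. unfold elt. rewrite !mulr1, zpow_opp. reflexivity.
Qed.

Lemma S_one : inS gone.
Proof. exists 0, false. unfold elt. simpl. rewrite gmul1. reflexivity. Qed.

Definition Scar := { x : Q | inS x }.

Lemma Sext (u v : Scar) : proj1_sig u = proj1_sig v -> u = v.
Proof.
  destruct u as [u pu], v as [v pv]. simpl. intros ->. f_equal. apply proof_irrelevance.
Qed.

Definition Smul (u v : Scar) : Scar :=
  exist _ (gmul (proj1_sig u) (proj1_sig v)) (S_mul _ _ (proj2_sig u) (proj2_sig v)).
Definition Sinv (u : Scar) : Scar := exist _ (ginv (proj1_sig u)) (S_inv _ (proj2_sig u)).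
Definition Sone : Scar := exist _ gone S_one.

Definition SG : Grp.
Proof.
  refine (MkGrp Scar Smul Sinv Sone _ _ _).
  - intros; apply Sext; simpl; apply gmulA.
  - intros; apply Sext; simpl; apply gmul1.
  - intros; apply Sext; simpl; apply gmulV.
Defined.

Lemma inS_c : inS c.
Proof. exists 1, false. unfold elt. rewrite mulr1, zpow1. reflexivity. Qed.
Lemma inS_d : inS d.
Proof. exists 0, true. unfold elt. simpl. rewrite gmul1. reflexivity. Qed.

Definition c' : SG := exist _ c inS_c.
Definition d' : SG := exist _ d inS_d.

Lemma incl_hom : is_hom (G:=SG) (H:=Q) (fun u => proj1_sig u).
Proof. intros u v. reflexivity. Qed.

Lemma gen_all z : inS z.
Proof.
  pose proof (proj1 HQ) as HS. pose proof (proj2 HQ) as HU.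
  assert (HS' : satisfies c' d' (relQ n)).
  { apply (sat_inj _ _ _ incl_hom). intros x y. apply Sext. exact HS. }
  destruct (HU SG c' d' HS') as [rho [Hr [Hrc [Hrd _]]]].
  destruct (HU Q c d HS) as [f0 [_ [_ [_ Hu]]]].
  assert (E1 : proj1_sig (rho z) = f0 z).
  { apply (Hu (fun z => proj1_sig (rho z))).
    - intros x y. rewrite Hr. reflexivity.
    - rewrite Hrc. reflexivity.
    - rewrite Hrd. reflexivity. }
  assert (E2 : z = f0 z).
  { apply (Hu (fun z => z)); auto. intros x y; reflexivity. }
  rewrite E2, <- E1. exact (proj2_sig (rho z)).
Qed.

Lemma elt_mod i j : elt i j = elt (i mod (2 * N)) j.
Proof.
  unfold elt. f_equal.
  rewrite (Z.div_mod i (2 * N)) at 1 by lia.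
  rewrite zpow_add, zpow_mul_one, gmul1. reflexivity.
  apply (c2N _ _ _ _ H1 H2).
Qed.

Lemma Q_finite : Finite Q.
Proof.
  exists (flat_map (fun k => [elt (Z.of_nat k) false; elt (Z.of_nat k) true]) (seq 0 (2 * n))).
  intro z. destruct (gen_all z) as [i [j ->]]. rewrite elt_mod.
  assert (Hr : 0 <= i mod (2 * N) < 2 * N) by (apply Z.mod_pos_bound; lia).
  apply in_flat_map. exists (Z.to_nat (i mod (2 * N))). split.
  - apply in_seq. lia.
  - rewrite Z2Nat.id by lia. destruct j; simpl; auto.
Qed.

End Gen.


Lemma eval_blocks (G : Grp) (c d : G)
  (H2 : gmul (zpow c 1) (gmul (zpow d 1) (gmul (zpow c 1) (gmul (zpow d (-1)) gone))) = gone)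
  (l : list (Z * Z)) :
  eval_word c d (flat_map (fun p => [(false, fst p); (true, 1); (false, snd p); (true, -1)]) l)
  = zpow c (sumZ (map fst l) - sumZ (map snd l)).
Proof.
  induction l as [|p l IH].
  - reflexivity.
  - cbn [flat_map]. rewrite eval_app, IH. unfold eval_word at 1. cbn -[zpow].
    rewrite mulr1, zpow1, zpowm1.
    assert (E : forall q X, gmul d (gmul (zpow c q) (gmul (ginv d) X)) = gmul (zpow c (- q)) X).
    { intros q X. rewrite <- (conjk _ _ _ H2), !gmulA. reflexivity. }
    rewrite (conjk _ _ _ H2), <- !zpow_add. f_equal. unfold sumZ. lia.
Qed.

Lemma map_fst_combine {A B : Type} (l : list A) (l' : list B) :
  length l = length l' -> map fst (combine l l') = l.
Proof.
  revert l'. induction l as [|x l IH]; intros [|y l'] H; simpl in *; try discriminate; auto.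
  f_equal. apply IH. lia.
Qed.

Lemma map_snd_combine {A B : Type} (l : list A) (l' : list B) :
  length l = length l' -> map snd (combine l l') = l'.
Proof.
  revert l'. induction l as [|x l IH]; intros [|y l'] H; simpl in *; try discriminate; auto.
  f_equal. apply IH. lia.
Qed.


Lemma sumZ_app (l1 l2 : list Z) : sumZ (l1 ++ l2) = sumZ l1 + sumZ l2.
Proof. induction l1 as [|x l IH]; simpl; [reflexivity|]. unfold sumZ in *. simpl. rewrite IH. lia. Qed.

Theorem corollary3p8 (n k : nat) (ns ms : list Z) :
  (2 <= n)%nat -> (1 <= k)%nat ->
  length ns = k -> length ms = k ->
  Forall (fun z => z <> 0%Z) ns -> Forall (fun z => z <> 0%Z) ms ->
  forall (P : Grp) (a b : P), presents P a b (relP n ns ms) ->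
  forall (Q : Grp) (c d : Q), presents Q c d (relQ n) ->
  (exists f : P -> Q, is_iso f) ->
  exists f : P -> Q, is_iso f /\ f a = c /\ f b = d.
Proof.
  intros Hn Hk Hlns Hlms Hns Hms P a b HP Q c d HQ [h [hh [hinv [Hh1 Hh2]]]].
  pose proof (proj1 HQ) as satQ.
  destruct (sat_relQ_eqs _ _ _ _ satQ) as [H1 H2].
  assert (satPQ : satisfies c d (relP n ns ms)).
  { unfold satisfies, relP. constructor; [simpl; exact H1|]. constructor; [|constructor].
    rewrite (eval_blocks _ _ _ H2).
    assert (HL : length (ns ++ [1 - sumZ ns]) = length (ms ++ [1 - sumZ ms])).
    { rewrite !length_app. simpl. lia. }
    rewrite map_fst_combine, map_snd_combine by exact HL.
    assert (S1 : forall x, sumZ [x] = x) by (intro; unfold sumZ; simpl; lia).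
    rewrite !sumZ_app, !S1. replace (sumZ ns + (1 - sumZ ns) - (sumZ ms + (1 - sumZ ms))) with 0 by lia.
    reflexivity. }
  destruct (proj2 HP Q c d satPQ) as [f [Hf [Hfa [Hfb _]]]].
  assert (fsurj : forall z, exists x, f x = z).
  { intro z. destruct (gen_all Q c d n Hn HQ z) as [i [j ->]].
    exists (gmul (zpow a i) (if j then b else gone)). unfold elt.
    rewrite Hf, (hom_zpow _ _ _ Hf), Hfa. destruct j; [rewrite Hfb | rewrite (hom1 _ _ _ Hf)]; reflexivity. }
  assert (phisurj : Surjective (fun q => f (hinv q))).
  { intro z. destruct (fsurj z) as [x Hx]. exists (h x). rewrite Hh1. exact Hx. }
  assert (phiinj : Injective (fun q => f (hinv q))).
  { apply (Endo_Injective_Surjective (Q_finite Q c d n Hn HQ)).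
    - intros x y. apply classic.
    - exact phisurj. }
  assert (finj : forall x y, f x = f y -> x = y).
  { intros x y E. rewrite <- (Hh1 x), <- (Hh1 y). f_equal. apply phiinj. simpl.
    rewrite !Hh1. exact E. }
  assert (satPQ' : satisfies a b (relQ n)).
  { apply (sat_inj _ _ f Hf a b _ finj). rewrite Hfa, Hfb. exact satQ. }
  destruct (proj2 HQ P a b satPQ') as [g [Hg [Hga [Hgb _]]]].
  destruct (proj2 HQ Q c d satQ) as [f0 [_ [_ [_ Hu0]]]].
  destruct (proj2 HP P a b (proj1 HP)) as [e0 [_ [_ [_ Hue]]]].
  assert (fg : forall z, f (g z) = z).
  { intro z. transitivity (f0 z).
    - apply (Hu0 (fun z => f (g z))).
      + intros x y. rewrite Hg, Hf. reflexivity.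
      + rewrite Hga. exact Hfa.
      + rewrite Hgb. exact Hfb.
    - symmetry. apply (Hu0 (fun z => z)); auto. intros x y; reflexivity. }
  assert (gf : forall x, g (f x) = x).
  { intro x. transitivity (e0 x).
    - apply (Hue (fun x => g (f x))).
      + intros u v. rewrite Hf, Hg. reflexivity.
      + rewrite Hfa. exact Hga.
      + rewrite Hfb. exact Hgb.
    - symmetry. apply (Hue (fun x => x)); auto. intros u v; reflexivity. }
  exists f. split; [|split; assumption].
  split; [exact Hf|]. exists g. split; assumption.
Qed.
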